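(* Let $n\ge 2$ be an integer and $A\subseteq L_n$. The following are equivalent: (i) $(X_n,\tau(A))$ is normal; (ii) the subset $L_n$ is $C^*$-embedded in $(X_n,\tau(A))$; (iii) the subset $L_n$ is $z$-embedded in $(X_n,\tau(A))$.
   Context: For $\overline{x},\overline{a}\in\mathbb R^n$ let $|\overline{x}-\overline{a}|$ be the Euclidean distance and $B(\overline{a},\epsilon)=\{\overline{x}\in\mathbb R^n:|\overline{x}-\overline{a}|<\epsilon\}$. Let $P_n=\{\overline{x}\in\mathbb R^n: x_n>0\}$, $L_n=\{\overline{x}\in\mathbb R^n: x_n=0\}$, $X_n=P_n\cup L_n$. For $\overline{a}\in L_n$ and $\epsilon>0$ put $\overline{a(\epsilon)}=(a_1,\dots,a_{n-1},\epsilon)$ and $\tilde B(\overline{a},\epsilon)=\{\overline{a}\}\cup B(\overline{a(\epsilon)},\epsilon)$. For $A\subseteq L_n$, the topology $\tau(A)$ on $X_n$ is generated by the local bases: at $\overline{a}\in P_n$, the sets $B(\overline{a},\epsilon)$ with $0<\epsilon<a_n$; at $\overline{a}\in A$, the sets $B(\overline{a},\epsilon)\cap X_n$ with $\epsilon>0$; at $\overline{a}\in L_n\setminus A$, the sets $\tilde B(\overline{a},\epsilon)$ with $\epsilon>0$. A subset $Y$ of a space $X$ is $C^*$-embedded in $X$ if every bounded continuous real function on $Y$ extends to a bounded continuous real function on $X$; $Y$ is $z$-embedded in $X$ if every zero set of $Y$ is the trace on $Y$ of some zero set of $X$. *)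

(* Defs.v *)
From Stdlib Require Import Reals.
From mathcomp Require Import all_boot.
Set Implicit Arguments. Unset Strict Implicit. Unset Printing Implicit Defensive.
Open Scope R_scope.

Definition pt (n : nat) := 'I_n -> R.

(* last coordinate x_n (the case n = 0 is irrelevant, n >= 2 below) *)
Definition lastc (n : nat) : pt n -> R :=
  match n return pt n -> R with
  | 0%N => fun _ => 0
  | m.+1 => fun x => x ord_max
  end.

Definition edist (n : nat) (x a : pt n) : R :=
  sqrt (\big[Rplus/0]_(i < n) ((x i - a i) ^ 2)).

Definition ball (n : nat) (a : pt n) (eps : R) : pt n -> Prop :=
  fun x => edist x a < eps.

Definition Pn (n : nat) : pt n -> Prop := fun x => lastc x > 0.
Definition Ln (n : nat) : pt n -> Prop := fun x => lastc x = 0.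
Definition Xn (n : nat) : pt n -> Prop := fun x => Pn x \/ Ln x.

Definition shift (n : nat) (a : pt n) (eps : R) : pt n :=
  fun i => if nat_of_ord i == n.-1 then eps else a i.

Definition tball (n : nat) (a : pt n) (eps : R) : pt n -> Prop :=
  fun x => x = a \/ ball (shift a eps) eps x.

(* The topology tau(A) on X_n: a set U (of points of X_n) is open iff it
   contains a basic neighbourhood of each of its points. *)
Definition tau_open (n : nat) (A : pt n -> Prop) (U : pt n -> Prop) : Prop :=
  (forall x, U x -> Xn x) /\
  (forall x, U x ->
     (Pn x -> exists eps, 0 < eps < lastc x /\ forall y, ball x eps y -> U y) /\
     (A x -> exists eps, 0 < eps /\ forall y, ball x eps y -> Xn y -> U y) /\
     (Ln x -> ~ A x -> exists eps, 0 < eps /\ forall y, tball x eps y -> U y)).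

Definition closed_in {T : Type} (X : T -> Prop) (op : (T -> Prop) -> Prop)
  (C : T -> Prop) : Prop :=
  (forall x, C x -> X x) /\ op (fun x => X x /\ ~ C x).

Definition normal_space {T : Type} (X : T -> Prop) (op : (T -> Prop) -> Prop) : Prop :=
  forall C D, closed_in X op C -> closed_in X op D ->
    (forall x, C x -> D x -> False) ->
    exists U V, op U /\ op V /\ (forall x, C x -> U x) /\ (forall x, D x -> V x) /\
      (forall x, U x -> V x -> False).

Definition R_open (V : R -> Prop) : Prop :=
  forall r, V r -> exists eps, 0 < eps /\ forall s, Rabs (s - r) < eps -> V s.

Definition cont_on {T : Type} (op : (T -> Prop) -> Prop) (Y : T -> Prop)
  (f : T -> R) : Prop :=
  forall V, R_open V -> exists U, op U /\ forall y, Y y -> (V (f y) <-> U y).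

Definition bounded_on {T : Type} (Y : T -> Prop) (f : T -> R) : Prop :=
  exists M, forall y, Y y -> Rabs (f y) <= M.

Definition Cstar_embedded {T : Type} (X : T -> Prop) (op : (T -> Prop) -> Prop)
  (Y : T -> Prop) : Prop :=
  forall f, cont_on op Y f -> bounded_on Y f ->
    exists g, cont_on op X g /\ bounded_on X g /\ forall y, Y y -> g y = f y.

Definition zero_set_of {T : Type} (op : (T -> Prop) -> Prop) (Y : T -> Prop)
  (Z : T -> Prop) : Prop :=
  exists f, cont_on op Y f /\ forall y, Z y <-> (Y y /\ f y = 0).

Definition z_embedded {T : Type} (X : T -> Prop) (op : (T -> Prop) -> Prop)
  (Y : T -> Prop) : Prop :=
  forall Z, zero_set_of op Y Z ->
    exists Z', zero_set_of op X Z' /\ forall y, Y y -> (Z y <-> Z' y).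

(* Main.v *)
Require Import Defs.
From Stdlib Require Import Reals Lra Psatz ClassicalEpsilon Classical FunctionalExtensionality PropExtensionality.
From HB Require Import structures.
From mathcomp Require Import all_boot zify.
From Stdlib Require Import Lia.
Set Implicit Arguments. Unset Strict Implicit.
Open Scope R_scope.

HB.instance Definition _ := Monoid.isComLaw.Build R 0 Rplus (fun x y z => esym (Rplus_assoc x y z)) Rplus_comm Rplus_0_l.

Section Sums.
Variable m : nat.
Notation N := m.+1.

Lemma sum_ge0 (F : 'I_N -> R) : (forall i, 0 <= F i) -> 0 <= \big[Rplus/0]_(i < N) F i.
Proof. move=> H; apply: (big_ind (fun x => 0 <= x)); [lra| move=> x y; lra| by []]. Qed.

Lemma sum_ge_term (F : 'I_N -> R) j : (forall i, 0 <= F i) -> F j <= \big[Rplus/0]_(i < N) F i.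
Proof.
move=> H; rewrite (bigD1 j) //=.
have h : 0 <= \big[Rplus/0]_(i < N | i != j) F i.
  apply: (big_ind (fun x => 0 <= x)); [lra| move=> x y; lra| by []].
rewrite -{1}(Rplus_0_r (F j)); apply: Rplus_le_compat_l; exact: h.
Qed.

Lemma sum_add (F G : 'I_N -> R) : \big[Rplus/0]_(i < N) (F i + G i) = \big[Rplus/0]_(i < N) F i + \big[Rplus/0]_(i < N) G i.
Proof. rewrite big_split /=. reflexivity. Qed.

Lemma sum_scal (c : R) (F : 'I_N -> R) : \big[Rplus/0]_(i < N) (c * F i) = c * \big[Rplus/0]_(i < N) F i.
Proof.
apply: (big_ind2 (fun a b => a = c * b)); [ring | move=> ? ? ? ? -> ->; ring | by []].
Qed.

Lemma sum_ext (F G : 'I_N -> R) : (forall i, F i = G i) -> \big[Rplus/0]_(i < N) F i = \big[Rplus/0]_(i < N) G i.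
Proof. by move=> H; apply: eq_bigr => i _. Qed.

Lemma cauchy_schwarz (a b : 'I_N -> R) :
  (\big[Rplus/0]_(i < N) (a i * b i))^2 <= (\big[Rplus/0]_(i < N) (a i ^ 2)) * (\big[Rplus/0]_(i < N) (b i ^ 2)).
Proof.
set A := \big[Rplus/0]_(i < N) (a i ^ 2).
set B := \big[Rplus/0]_(i < N) (a i * b i).
set C := \big[Rplus/0]_(i < N) (b i ^ 2).
have HA : 0 <= A by apply: sum_ge0 => i; apply: pow2_ge_0.
have HC : 0 <= C by apply: sum_ge0 => i; apply: pow2_ge_0.
have key : forall t, 0 <= t^2 * A + 2 * t * B + C.
  move=> t.
  have -> : t^2 * A + 2 * t * B + C = \big[Rplus/0]_(i < N) ((t * a i + b i)^2).
    rewrite /A /B /C -!sum_scal -!sum_add; apply: sum_ext => i; ring.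
  apply: sum_ge0 => i; apply: pow2_ge_0.
case: (Req_dec A 0) => HA0.
- have HB : B = 0.
    case: (Req_dec B 0) => // hB.
    have := key (- (C + 1) / (2 * B)). rewrite HA0.
    have -> : 2 * (- (C + 1) / (2 * B)) * B = - (C + 1) by field.
    lra.
  rewrite HB HA0; lra.
- have hA : 0 < A by lra.
  have := key (- B / A).
  have -> : (- B / A)^2 * A + 2 * (- B / A) * B + C = C - B^2 / A by field; lra.
  move=> h.
  have : B^2 / A <= C by lra.
  move=> h2. have : B^2 <= C * A.
    have -> : B^2 = (B^2 / A) * A by field; lra.
    apply: Rmult_le_compat_r; lra.
  lra.
Qed.

End Sums.

Section Geo.
Variable m : nat.
Notation N := m.+1.
Notation P := (Defs.pt N).

Definition sq (x y : P) := \big[Rplus/0]_(i < N) ((x i - y i) ^ 2).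

Lemma sq_ge0 (x y : P) : 0 <= sq x y.
Proof. apply: sum_ge0 => i; apply: pow2_ge_0. Qed.

Lemma edistE x y : edist x y = sqrt (sq x y).
Proof. by []. Qed.

Lemma edist_ge0 (x y : P) : 0 <= edist x y.
Proof. apply: sqrt_pos. Qed.

Lemma edist_sq (x y : P) : (edist x y)^2 = sq x y.
Proof. rewrite edistE /= Rmult_1_r sqrt_sqrt //; apply: sq_ge0. Qed.

Lemma sq_sym (x y : P) : sq x y = sq y x.
Proof. apply: sum_ext => i; ring. Qed.

Lemma edist_sym (x y : P) : edist x y = edist y x.
Proof. by rewrite !edistE sq_sym. Qed.

Lemma sq_xx (x : P) : sq x x = 0.
Proof.
rewrite /sq; apply: (big_ind (fun v => v = 0)) => //; first by move=> ? ? -> ->; ring.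
move=> i _; ring.
Qed.

Lemma edist_xx (x : P) : edist x x = 0.
Proof. by rewrite edistE sq_xx sqrt_0. Qed.

Lemma coord_le (x y : P) i : Rabs (x i - y i) <= edist x y.
Proof.
rewrite edistE -sqrt_Rsqr_abs; apply: sqrt_le_1_alt.
rewrite /Rsqr.
have := @sum_ge_term m (fun j => (x j - y j)^2) i (fun j => pow2_ge_0 _).
rewrite /sq /=; lra.
Qed.

Lemma edist_triangle (x y z : P) : edist x z <= edist x y + edist y z.
Proof.
set a := fun i => x i - y i. set b := fun i => y i - z i.
set A := \big[Rplus/0]_(i < N) (a i ^ 2).
set B := \big[Rplus/0]_(i < N) (a i * b i).
set C := \big[Rplus/0]_(i < N) (b i ^ 2).
have HA : 0 <= A by apply: sum_ge0 => i; apply: pow2_ge_0.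
have HC : 0 <= C by apply: sum_ge0 => i; apply: pow2_ge_0.
have e1 : sq x z = A + 2 * B + C.
  rewrite /A /B /C -sum_scal -!sum_add /sq; apply: sum_ext => i; rewrite /a /b; ring.
have e2 : edist x y = sqrt A by [].
have e3 : edist y z = sqrt C by [].
have cs := cauchy_schwarz a b. rewrite -/A -/B -/C in cs.
have hB : B <= sqrt A * sqrt C.
  rewrite -sqrt_mult //.
  apply: Rle_trans (Rle_abs B) _.
  rewrite -sqrt_Rsqr_abs; apply: sqrt_le_1_alt. rewrite /Rsqr. simpl in cs. lra.
rewrite e2 e3 edistE e1.
have sA := sqrt_pos A. have sC := sqrt_pos C.
rewrite -(sqrt_Rsqr (sqrt A + sqrt C)); last lra.
apply: sqrt_le_1_alt. rewrite /Rsqr.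
have : sqrt A * sqrt A = A by apply: sqrt_sqrt.
have : sqrt C * sqrt C = C by apply: sqrt_sqrt.
nra.
Qed.

Lemma lastcE (x : P) : lastc x = x ord_max.
Proof. by []. Qed.

Lemma sum_last (F : 'I_N -> R) : \big[Rplus/0]_(i < N) F i = F ord_max + \big[Rplus/0]_(i < N | i != ord_max) F i.
Proof. by rewrite (bigD1 ord_max). Qed.

Lemma sq_shift (y b : P) e : lastc b = 0 ->
  sq y (shift b e) = sq y b - 2 * e * lastc y + e ^ 2.
Proof.
move=> hb. rewrite /sq sum_last [in RHS]sum_last.
rewrite {1}/shift eqxx.
have -> : \big[Rplus/0]_(i < N | i != ord_max) ((y i - (if nat_of_ord i == m then e else b i)) ^ 2)
        = \big[Rplus/0]_(i < N | i != ord_max) ((y i - b i) ^ 2).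
  apply: eq_bigr => i hi.
  have -> : (nat_of_ord i == m) = false.
    apply/negbTE; move: hi; apply: contra => /eqP h; apply/eqP; apply: val_inj; exact: h.
  by [].
move: hb; rewrite !lastcE => hb. rewrite hb. ring.
Qed.

Lemma ball_shift (y b : P) e : lastc b = 0 -> 0 < e ->
  (ball (shift b e) e y <-> sq y b < 2 * e * lastc y).
Proof.
move=> hb he. rewrite /ball edistE sq_shift //.
have h0 := sq_ge0 y (shift b e). rewrite sq_shift // in h0.
split => h.
- apply: Rnot_le_lt => hc.
  have : sqrt (e ^ 2) <= sqrt (sq y b - 2 * e * lastc y + e ^ 2).
    apply: sqrt_le_1_alt; lra.
  rewrite sqrt_pow2; lra.
- rewrite -[X in _ < X](sqrt_pow2 e); last lra.
  apply: sqrt_lt_1_alt. split; lra.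
Qed.

End Geo.

Section Topo.
Variable m : nat.
Notation N := m.+1.
Notation P := (Defs.pt N).
Variable A : P -> Prop.
Hypothesis hA : forall a, A a -> Ln a.
Notation op := (tau_open A).

Lemma op_sub U x : op U -> U x -> Xn x.
Proof. by case=> h _; apply: h. Qed.

Lemma op_ext (U V : P -> Prop) : (forall x, U x <-> V x) -> op U -> op V.
Proof.
move=> e [h1 h2]; split; first by move=> x /e /h1.
move=> x /e /h2 [c1 [c2 c3]]; split; [|split].
- move=> /c1 [eps [he hb]]; exists eps; split => // y /hb /e //.
- move=> /c2 [eps [he hb]]; exists eps; split => // y hy hx; apply/e; exact: hb.
- move=> hl hna; have [eps [he hb]] := c3 hl hna; exists eps; split => // y /hb /e //.
Qed.

Lemma open_local (U : P -> Prop) : (forall x, U x -> Xn x) ->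
  (forall x, U x -> exists V, op V /\ V x /\ forall y, V y -> U y) -> op U.
Proof.
move=> h1 h2; split => // x /h2 [V [[_ hV] [Vx VU]]].
have [c1 [c2 c3]] := hV x Vx; split; [|split].
- move=> /c1 [eps [he hb]]; exists eps; split => // y /hb /VU //.
- move=> /c2 [eps [he hb]]; exists eps; split => // y hy hx; apply: VU; exact: hb.
- move=> hl hna; have [eps [he hb]] := c3 hl hna; exists eps; split => // y /hb /VU //.
Qed.

Lemma Pn_not_Ln (x : P) : Pn x -> Ln x -> False.
Proof. rewrite /Pn /Ln; lra. Qed.

Lemma lastc_le (x y : P) : Rabs (lastc x - lastc y) <= edist x y.
Proof. rewrite !lastcE; apply: coord_le. Qed.

Lemma tball_cases (b y : P) e : Ln b -> 0 < e -> tball b e y ->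
  y = b \/ (sq y b < 2 * e * lastc y /\ Pn y).
Proof.
move=> hb he [->|h]; [by left|right].
have h' := (ball_shift y hb he).1 h.
split => //. have := sq_ge0 y b. rewrite /Pn. nra.
Qed.

Lemma tball_Xn (b y : P) e : Ln b -> 0 < e -> tball b e y -> Xn y.
Proof. move=> hb he /(tball_cases hb he) [->|[_ h]]; [by right | by left]. Qed.

Lemma tball_Ln (b y : P) e : Ln b -> 0 < e -> tball b e y -> Ln y -> y = b.
Proof. move=> hb he /(tball_cases hb he) [->|[_ h]] // hl; case: (Pn_not_Ln h hl). Qed.

Lemma tball_mono (b y : P) e e' : Ln b -> 0 < e' -> e' <= e -> tball b e' y -> tball b e y.
Proof.
move=> hb he' hle /(tball_cases hb he') [->|[h1 h2]]; [by left| right].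
apply/(ball_shift y hb _); first lra.
move: h2; rewrite /Pn => h2. nra.
Qed.

Lemma tball_dist (b y : P) e : Ln b -> 0 < e -> tball b e y -> edist y b < 2 * e.
Proof.
move=> hb he /(tball_cases hb he) [->|[h1 h2]]; first by rewrite edist_xx; lra.
have hc := lastc_le y b. move: hb; rewrite /Ln => hb. rewrite hb Rminus_0_r in hc.
rewrite Rabs_pos_eq in hc; last (move: h2; rewrite /Pn; lra).
have hsq := edist_sq y b. have hd := edist_ge0 y b. move: h2; rewrite /Pn => h2.
simpl in hsq. nra.
Qed.

Lemma abs_le_iff (u v : R) : Rabs u <= v -> - v <= u /\ u <= v.
Proof. move=> h; split; [have := Rle_abs (- u); rewrite Rabs_Ropp | have := Rle_abs u]; lra. Qed.

Lemma lastc_near (x y : P) : lastc x - edist y x <= lastc y /\ lastc y <= lastc x + edist y x.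
Proof. have := abs_le_iff (lastc_le y x); lra. Qed.

Lemma ball_P_open (x : P) e : 0 < e -> e <= lastc x -> op (ball x e).
Proof.
move=> he hex.
have inP : forall z, ball x e z -> Pn z.
  move=> z; rewrite /ball /Pn => hz; have := lastc_near x z; lra.
split; first by move=> z /inP; left.
move=> z hz; split; [|split].
- move=> hzP. exists (Rmin (e - edist z x) (lastc z) / 2); split.
  + split.
    * apply: Rdiv_lt_0_compat; last lra.
      apply: Rmin_glb_lt; rewrite /ball in hz; [lra| exact hzP].
    * have := Rmin_r (e - edist z x) (lastc z); move: hzP; rewrite /Pn; lra.
  + move=> w hw; rewrite /ball in hw hz |- *.
    have := edist_triangle w z x. have := Rmin_l (e - edist z x) (lastc z). lra.
- move=> /hA hl; case: (Pn_not_Ln (inP _ hz) hl).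
- move=> hl; case: (Pn_not_Ln (inP _ hz) hl).
Qed.

Definition BX (x : P) e := fun y => ball x e y /\ Xn y.

Lemma ball_in_P (z w : P) eps : Pn z -> eps <= lastc z -> ball z eps w -> Pn w.
Proof. rewrite /Pn /ball => hz he hw; have := lastc_near z w; lra. Qed.

Lemma BX_open (x : P) e : op (BX x e).
Proof.
split; first by move=> z [].
move=> z [hz hXz]; rewrite /ball in hz; split; [|split].
- move=> hzP. exists (Rmin (e - edist z x) (lastc z) / 2); split.
  + split.
    * apply: Rdiv_lt_0_compat; last lra.
      apply: Rmin_glb_lt; [lra| exact hzP].
    * have := Rmin_r (e - edist z x) (lastc z); move: (hzP); rewrite /Pn; lra.
  + move=> w hw; split.
    * rewrite /ball in hw |- *.
      have := edist_triangle w z x. have := Rmin_l (e - edist z x) (lastc z). lra.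
    * left; apply: (ball_in_P hzP _ hw).
      have := Rmin_r (e - edist z x) (lastc z); move: (hzP); rewrite /Pn; lra.
- move=> hAz; exists (e - edist z x); split; first lra.
  move=> w hw hXw; split => //; rewrite /ball in hw |- *; have := edist_triangle w z x; lra.
- move=> hl hna; exists ((e - edist z x) / 2); split; first lra.
  move=> w hw; split.
  + have := tball_dist hl (_ : 0 < (e - edist z x) / 2) hw. rewrite /ball.
    have := edist_triangle w z x. move=> h1 h2; apply: Rle_lt_trans h1 _.
    have : 0 < (e - edist z x) / 2 by lra. move=> h3; have := h2 h3; lra.
  + apply: tball_Xn hw; [exact hl| lra].
Qed.

Lemma tball_open (b : P) e : Ln b -> ~ A b -> 0 < e -> op (tball b e).
Proof.
move=> hb hnA he.
split; first by move=> z; apply: tball_Xn.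
move=> z [->|hz].
- split; [move=> hP; case: (Pn_not_Ln hP hb)| split; [move=> /hnA []|]].
  move=> _ _; exists e; split => //.
- have hzP : Pn z.
    have := (ball_shift z hb he).1 hz. have := sq_ge0 z b. rewrite /Pn. nra.
  split; [|split; [move=> /hA hl; case: (Pn_not_Ln hzP hl)| move=> hl; case: (Pn_not_Ln hzP hl)]].
  move=> _. rewrite /ball in hz.
  exists (Rmin (e - edist z (shift b e)) (lastc z) / 2); split.
  + split.
    * apply: Rdiv_lt_0_compat; last lra.
      apply: Rmin_glb_lt; [lra| exact hzP].
    * have := Rmin_r (e - edist z (shift b e)) (lastc z); move: (hzP); rewrite /Pn; lra.
  + move=> w hw; right; rewrite /ball in hw |- *.
    have := edist_triangle w z (shift b e). have := Rmin_l (e - edist z (shift b e)) (lastc z). lra.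
Qed.

Lemma op_inter (U V : P -> Prop) : op U -> op V -> op (fun x => U x /\ V x).
Proof.
move=> hU hV; apply: open_local; first by move=> x [/(op_sub hU)].
move=> x [hUx hVx].
have [cU1 [cU2 cU3]] := hU.2 x hUx. have [cV1 [cV2 cV3]] := hV.2 x hVx.
case: (op_sub hU hUx) => [hP|hL].
- have [e1 [[he1 he1'] hb1]] := cU1 hP. have [e2 [[he2 he2'] hb2]] := cV1 hP.
  exists (ball x (Rmin e1 e2)); split; [|split].
  + apply: ball_P_open; first by apply: Rmin_glb_lt.
    have := Rmin_l e1 e2; lra.
  + rewrite /ball edist_xx; by apply: Rmin_glb_lt.
  + move=> y hy; split; [apply: hb1| apply: hb2]; rewrite /ball in hy |- *;
    [have := Rmin_l e1 e2| have := Rmin_r e1 e2]; lra.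
- case: (classic (A x)) => hAx.
  + have [e1 [he1 hb1]] := cU2 hAx. have [e2 [he2 hb2]] := cV2 hAx.
    exists (BX x (Rmin e1 e2)); split; [exact: BX_open|split].
    * split; [rewrite /ball edist_xx; by apply: Rmin_glb_lt| by right].
    * move=> y [hy hXy]; split; [apply: hb1| apply: hb2] => //; rewrite /ball in hy |- *;
      [have := Rmin_l e1 e2| have := Rmin_r e1 e2]; lra.
  + have [e1 [he1 hb1]] := cU3 hL hAx. have [e2 [he2 hb2]] := cV3 hL hAx.
    have hm : 0 < Rmin e1 e2 by apply: Rmin_glb_lt.
    exists (tball x (Rmin e1 e2)); split; [exact: tball_open|split; first by left].
    move=> y hy; split; [apply: hb1| apply: hb2]; apply: tball_mono hy => //;
    [apply: Rmin_l| apply: Rmin_r].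
Qed.

Lemma nbhd_in_ball (x : P) e : Xn x -> 0 < e -> exists V, op V /\ V x /\ forall y, V y -> edist y x < e.
Proof.
move=> hx he; exists (BX x e); split; [exact: BX_open| split].
- split => //; rewrite /ball edist_xx //.
- by move=> y [].
Qed.

Lemma Xn_open : op (@Xn N).
Proof.
apply: open_local => // x hx; exists (BX x 1); split; [exact: BX_open| split].
- split => //; rewrite /ball edist_xx; lra.
- by move=> y [].
Qed.

Lemma Pn_open : op (@Pn N).
Proof.
apply: open_local; first by move=> x; left.
move=> x hx; exists (ball x (lastc x)); split; [apply: ball_P_open => //; lra| split].
- rewrite /ball edist_xx; exact hx.
- move=> y hy; apply: ball_in_P hx _ hy; lra.
Qed.

Lemma Ln_closed : closed_in (@Xn N) op (@Ln N).
Proof.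
split; first by move=> x; right.
apply: op_ext Pn_open => x; split.
- move=> hx; split; [by left| move=> hl; exact: Pn_not_Ln hx hl].
- by case=> [[]].
Qed.

End Topo.

Definition cpt (g : R -> R) (u : R) :=
  forall e, 0 < e -> exists d, 0 < d /\ forall v, Rabs (v - u) < d -> Rabs (g v - g u) < e.

Lemma cpt_of (g : R -> R) u : continuity_pt g u -> cpt g u.
Proof.
move=> h e he; have [d [hd H]] := h e he; exists d; split => // v hv.
case: (Req_dec v u) => [->|ne]; first by rewrite Rminus_diag Rabs_R0.
apply: (H v); split; [split => //; by auto| exact hv].
Qed.

Lemma cpt_abs u : cpt Rabs u.
Proof. apply: cpt_of; apply: Rcontinuity_abs. Qed.

Lemma cpt_inv u : u <> 0 -> cpt Rinv u.
Proof.
move=> hu; apply: (cpt_of (g := (/ id)%F)).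
apply: continuity_pt_inv => //. apply: derivable_continuous_pt; apply: derivable_pt_id.
Qed.

Lemma cpt_sqr u : cpt (fun t => t * t) u.
Proof.
apply: (cpt_of (g := (id * id)%F)).
apply: continuity_pt_mult; apply: derivable_continuous_pt; apply: derivable_pt_id.
Qed.

Lemma cpt_scal c u : cpt (fun t => c * t) u.
Proof.
move=> e he; exists (e / (Rabs c + 1)); split.
  apply: Rdiv_lt_0_compat => //; have := Rabs_pos c; lra.
move=> v hv; rewrite -Rmult_minus_distr_l Rabs_mult.
have hc := Rabs_pos c.
have h1 : Rabs c * Rabs (v - u) <= Rabs c * (e / (Rabs c + 1)).
  apply: Rmult_le_compat_l => //; lra.
have h2 : Rabs c * (e / (Rabs c + 1)) < e.
  have -> : Rabs c * (e / (Rabs c + 1)) = e * (Rabs c / (Rabs c + 1)) by field; lra.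
  rewrite -{2}(Rmult_1_r e); apply: Rmult_lt_compat_l => //.
  apply: (Rmult_lt_reg_r (Rabs c + 1)); first lra.
  rewrite Rmult_1_l /Rdiv Rmult_assoc Rinv_l; lra.
lra.
Qed.

Section Cont.
Variable m : nat.
Notation N := m.+1.
Notation P := (Defs.pt N).
Variable A : P -> Prop.
Hypothesis hA : forall a, A a -> Ln a.
Notation op := (tau_open A).

Definition cont_at (Y : P -> Prop) (f : P -> R) (y : P) :=
  forall e, 0 < e -> exists V, op V /\ V y /\ forall z, V z -> Y z -> Rabs (f z - f y) < e.

Definition ccont (Y : P -> Prop) (f : P -> R) := forall y, Y y -> cont_at Y f y.

Lemma ccont_cont_on Y f : (forall y, Y y -> Xn y) -> ccont Y f -> cont_on op Y f.
Proof.
move=> hY hc W hW.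
exists (fun x => Xn x /\ exists V, op V /\ V x /\ forall z, V z -> Y z -> W (f z)); split.
- apply: open_local => //; first by move=> x [].
  move=> x [hx [V [hV [Vx VW]]]]; exists V; split => //; split => // z Vz.
  split; [exact: op_sub hV Vz| exists V; split => //].
- move=> y hy; split.
  + move=> hWy; have [e [he hball]] := hW _ hWy.
    have [V [hV [Vy VH]]] := hc y hy e he.
    split; first exact: hY.
    exists V; split => //; split => // z Vz Yz; apply: hball; exact: VH.
  + by move=> [_ [V [_ [Vy VW]]]]; apply: VW.
Qed.

Lemma cont_on_ccont Y f : cont_on op Y f -> ccont Y f.
Proof.
move=> hc y hy e he.
have hW : R_open (fun r => Rabs (r - f y) < e).
  move=> r hr; exists (e - Rabs (r - f y)); split; first lra.
  move=> s hs; have := Rabs_triang (s - r) (r - f y).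
  have -> : s - r + (r - f y) = s - f y by ring. lra.
have [U [hU hUW]] := hc _ hW.
exists U; split => //; split.
- apply/(hUW y hy); rewrite Rminus_diag Rabs_R0; lra.
- by move=> z Uz Yz; apply/(hUW z Yz).
Qed.

Lemma ccont_sub (Y Y' : P -> Prop) f : (forall y, Y' y -> Y y) -> ccont Y f -> ccont Y' f.
Proof.
move=> hs hc y hy e he; have [V [hV [Vy H]]] := hc y (hs _ hy) e he.
exists V; split => //; split => // z Vz Yz; apply: H => //; exact: hs.
Qed.

Lemma ccont_const Y c : (forall y, Y y -> Xn y) -> ccont Y (fun _ => c).
Proof.
move=> hY y hy e he; exists (@Xn N); split; [exact: Xn_open|split; [exact: hY|]].
move=> z _ _; rewrite Rminus_diag Rabs_R0; lra.
Qed.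

Lemma ccont_comp Y f g : (forall y, Y y -> cpt g (f y)) -> ccont Y f -> ccont Y (fun x => g (f x)).
Proof.
move=> hg hf y hy e he.
have [d [hd H]] := hg y hy e he.
have [V [hV [Vy H2]]] := hf y hy d hd.
exists V; split => //; split => // z Vz Yz; apply: H; exact: H2.
Qed.

Lemma ccont_add Y f g : ccont Y f -> ccont Y g -> ccont Y (fun x => f x + g x).
Proof.
move=> hf hg y hy e he.
have [V1 [hV1 [V1y H1]]] := hf y hy (e/2) ltac:(lra).
have [V2 [hV2 [V2y H2]]] := hg y hy (e/2) ltac:(lra).
exists (fun x => V1 x /\ V2 x); split; [exact: op_inter|split => //].
move=> z [z1 z2] Yz; have := H1 z z1 Yz; have := H2 z z2 Yz.
have := Rabs_triang (f z - f y) (g z - g y).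
have -> : f z - f y + (g z - g y) = f z + g z - (f y + g y) by ring. lra.
Qed.

Lemma ccont_scal Y f c : ccont Y f -> ccont Y (fun x => c * f x).
Proof. move=> hf; apply: (ccont_comp (g := fun t => c * t)) => // y _; apply: cpt_scal. Qed.

Lemma ccont_opp Y f : ccont Y f -> ccont Y (fun x => - f x).
Proof.
move=> hf; have := ccont_scal (-1) hf.
have -> : (fun x => -1 * f x) = (fun x => - f x) by apply: functional_extensionality => x; ring.
done.
Qed.

Lemma ccont_minus Y f g : ccont Y f -> ccont Y g -> ccont Y (fun x => f x - g x).
Proof. move=> hf hg; apply: ccont_add => //; exact: ccont_opp. Qed.

Lemma ccont_mul Y f g : ccont Y f -> ccont Y g -> ccont Y (fun x => f x * g x).
Proof.
move=> hf hg.
have h1 := ccont_comp (fun y _ => cpt_sqr (f y + g y)) (ccont_add hf hg).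
have h2 := ccont_comp (fun y _ => cpt_sqr (f y - g y)) (ccont_minus hf hg).
have := ccont_scal (/4) (ccont_minus h1 h2).
have -> // : (fun x => / 4 * ((f x + g x) * (f x + g x) - (f x - g x) * (f x - g x))) = (fun x => f x * g x).
apply: functional_extensionality => x; field.
Qed.

Lemma ccont_abs Y f : ccont Y f -> ccont Y (fun x => Rabs (f x)).
Proof. move=> hf; apply: (ccont_comp (g := Rabs)) => // y _; apply: cpt_abs. Qed.

Lemma ccont_inv Y f : (forall y, Y y -> f y <> 0) -> ccont Y f -> ccont Y (fun x => / f x).
Proof. move=> hn hf; apply: (ccont_comp (g := Rinv)) => // y hy; apply: cpt_inv; exact: hn. Qed.

Lemma ccont_div Y f g : (forall y, Y y -> g y <> 0) -> ccont Y f -> ccont Y g -> ccont Y (fun x => f x / g x).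
Proof. move=> hn hf hg; apply: ccont_mul => //; exact: ccont_inv. Qed.

Lemma ccont_max0 Y f : ccont Y f -> ccont Y (fun x => Rmax (f x) 0).
Proof.
move=> hf.
have := ccont_scal (/2) (ccont_add hf (ccont_abs hf)).
have -> // : (fun x => /2 * (f x + Rabs (f x))) = (fun x => Rmax (f x) 0).
apply: functional_extensionality => x.
case: (Rle_dec 0 (f x)) => h.
- rewrite Rmax_left // Rabs_pos_eq //; field.
- rewrite Rmax_right; last lra. rewrite Rabs_left; [field|lra].
Qed.

Lemma ccont_eucl Y f : (forall y, Y y -> Xn y) ->
  (forall y, Y y -> forall e, 0 < e -> exists d, 0 < d /\ forall z, Xn z -> edist z y < d -> Rabs (f z - f y) < e) ->
  ccont Y f.
Proof.
move=> hY hf y hy e he; have [d [hd H]] := hf y hy e he.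
have [V [hV [Vy Vb]]] := nbhd_in_ball A (hY _ hy) hd.
exists V; split => //; split => // z Vz _; apply: H; [exact: op_sub hV Vz| exact: Vb].
Qed.

Lemma ccont_lastc : ccont (@Xn N) (@lastc N).
Proof.
apply: ccont_eucl => // y hy e he; exists e; split => // z _ hz.
have := lastc_le z y; lra.
Qed.

Lemma open_lt f c : ccont (@Xn N) f -> op (fun x => Xn x /\ f x < c).
Proof.
move=> hf; apply: open_local; first by move=> x [].
move=> x [hx hfx]; have [V [hV [Vx H]]] := hf x hx (c - f x) ltac:(lra).
exists V; split => //; split => // z Vz; have hz := op_sub hV Vz; split => //.
have := H z Vz hz; have := Rle_abs (f z - f x); lra.
Qed.

Lemma open_gt f c : ccont (@Xn N) f -> op (fun x => Xn x /\ c < f x).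
Proof.
move=> hf; apply: open_local; first by move=> x [].
move=> x [hx hfx]; have [V [hV [Vx H]]] := hf x hx (f x - c) ltac:(lra).
exists V; split => //; split => // z Vz; have hz := op_sub hV Vz; split => //.
have := H z Vz hz; have := Rle_abs (- (f z - f x)); rewrite Rabs_Ropp; lra.
Qed.

End Cont.

Lemma geom_small c0 eps : 0 < eps -> exists n, c0 * (2/3)^n < eps.
Proof.
move=> he.
have [M hM] := pow_lt_1_zero (2/3) ltac:(rewrite Rabs_pos_eq; lra) (eps / (Rabs c0 + 1)) ltac:(apply: Rdiv_lt_0_compat => //; have := Rabs_pos c0; lra).
exists M. have := hM M (le_n M).
have hp : 0 <= (2/3)^M by apply: pow_le; lra.
rewrite Rabs_pos_eq // => h.
have hc := Rabs_pos c0.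
apply: Rle_lt_trans (Rle_abs _) _. rewrite Rabs_mult (Rabs_pos_eq ((2/3)^M)) //.
have h2 : Rabs c0 * (2/3)^M <= Rabs c0 * (eps / (Rabs c0 + 1)).
  apply: Rmult_le_compat_l => //; lra.
have h3 : Rabs c0 * (eps / (Rabs c0 + 1)) < eps.
  have -> : Rabs c0 * (eps / (Rabs c0 + 1)) = eps * (Rabs c0 / (Rabs c0 + 1)) by field; lra.
  rewrite -{2}(Rmult_1_r eps); apply: Rmult_lt_compat_l => //.
  apply: (Rmult_lt_reg_r (Rabs c0 + 1)); first lra.
  rewrite Rmult_1_l /Rdiv Rmult_assoc Rinv_l; lra.
lra.
Qed.

Lemma lim_le (u : nat -> R) l a b n : Un_cv u l -> (forall p, Rabs (u (n + p)%nat - a) <= b) -> Rabs (l - a) <= b.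
Proof.
move=> hu hb; apply: Rnot_lt_le => hlt.
have [K hK] := hu (Rabs (l - a) - b) ltac:(lra).
have := hK (n + K)%nat ltac:(apply/leP; rewrite leq_addl //).
rewrite /Rdist => h1. have := hb K.
have := Rabs_triang (l - u (n + K)%nat) (u (n + K)%nat - a).
have -> : l - u (n + K)%nat + (u (n + K)%nat - a) = l - a by ring.
rewrite Rabs_minus_sym in h1. lra.
Qed.

Section Tietze.
Variable m : nat.
Notation N := m.+1.
Notation P := (Defs.pt N).
Variable A : P -> Prop.
Hypothesis hA : forall a, A a -> Ln a.
Notation op := (tau_open A).
Notation ccont := (ccont A).

Definition sep_spec (f : P -> R) c (phi : P -> R) :=
  ccont (@Xn N) phi /\ (forall x, Xn x -> Rabs (phi x) <= 1) /\
  (forall x, Ln x -> f x <= - c -> phi x = -1) /\ (forall x, Ln x -> c <= f x -> phi x = 1).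

Hypothesis SepH : forall f c, ccont (@Ln N) f -> 0 < c -> exists phi, sep_spec f c phi.

Lemma tietze : Cstar_embedded (@Xn N) op (@Ln N).
Proof.
move=> f hfc [M hM].
have hf := cont_on_ccont hfc.
set c0 := Rabs M + 1.
have hc0 : 0 < c0 by have := Rabs_pos M; rewrite /c0; lra.
pose ck k := c0 * (2/3)^k.
have ck_pos : forall k, 0 < ck k.
  move=> k; rewrite /ck; apply: Rmult_lt_0_compat => //; apply: pow_lt; lra.
have ckS : forall k, ck k.+1 = 2/3 * ck k by move=> k; rewrite /ck /=; ring.
pose sep g c := epsilon (inhabits (fun _ : P => 0)) (sep_spec g c).
pose fix fk k := match k with 0 => f | k'.+1 => fun x => fk k' x - (ck k' / 3) * sep (fk k') (ck k' / 3) x end.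
pose gk k x := (ck k / 3) * sep (fk k) (ck k / 3) x.
have Inv : forall k, ccont (@Ln N) (fk k) /\ (forall y, Ln y -> Rabs (fk k y) <= ck k).
  elim=> [|k [IH1 IH2]].
  - split => // y hy; rewrite /ck /= Rmult_1_r /c0; have := hM y hy; have := Rle_abs M; lra.
  - have hs : sep_spec (fk k) (ck k / 3) (sep (fk k) (ck k / 3)).
      apply: epsilon_spec; apply: SepH => //; have := ck_pos k; lra.
    case: hs => [s1 [s2 [s3 s4]]].
    split.
    + apply: ccont_minus => //; apply: ccont_scal; apply: ccont_sub s1 => y; by right.
    + move=> y hy; rewrite ckS /=.
      have hb := IH2 y hy. have hs2 := s2 y (or_intror hy).
      have := abs_le_iff hb => hb'.
      case: (Rle_lt_dec (fk k y) (- (ck k / 3))) => h1.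
      * rewrite (s3 y hy h1). rewrite Rabs_left1; lra.
      * case: (Rle_lt_dec (ck k / 3) (fk k y)) => h2.
        -- rewrite (s4 y hy h2). rewrite Rabs_pos_eq; lra.
        -- have := abs_le_iff hs2 => hs2'.
           have hck := ck_pos k.
           apply: Rabs_le. split; nra.
have gk_spec : forall k, ccont (@Xn N) (gk k) /\ forall x, Xn x -> Rabs (gk k x) <= ck k / 3.
  move=> k; have [I1 _] := Inv k.
  have hs : sep_spec (fk k) (ck k / 3) (sep (fk k) (ck k / 3)).
    apply: epsilon_spec; apply: SepH => //; have := ck_pos k; lra.
  case: hs => [s1 [s2 _]]; split; first exact: ccont_scal.
  move=> x hx; rewrite /gk Rabs_mult Rabs_pos_eq; last (have := ck_pos k; lra).
  have := s2 x hx; have := ck_pos k; nra.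
pose fix Sp (n : nat) (x : P) {struct n} : R := match n with 0 => 0 | n'.+1 => Sp n' x + gk n' x end.
have S_L : forall n y, Ln y -> Sp n y = f y - fk n y.
  elim=> [|n IH] y hy /=; first ring.
  rewrite IH // /gk; ring.
have S_cont : forall n, ccont (@Xn N) (Sp n).
  elim=> [|n IH] /=; first by apply: ccont_const.
  apply: ccont_add => //; exact: (gk_spec n).1.
have S_cauchy : forall x, Xn x -> forall n p, Rabs (Sp (n + p)%nat x - Sp n x) <= ck n - ck (n + p)%nat.
  move=> x hx n; elim=> [|p IH].
  - rewrite addn0 Rminus_diag Rabs_R0; lra.
  - rewrite addnS /=.
    have := (gk_spec (n + p)%nat).2 x hx.
    have := Rabs_triang (Sp (n + p)%nat x - Sp n x) (gk (n + p)%nat x).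
    have -> : Sp (n + p)%nat x - Sp n x + gk (n + p)%nat x = Sp (n + p)%nat x + gk (n + p)%nat x - Sp n x by ring.
    rewrite ckS. lra.
have S_cauchy' : forall x, Xn x -> forall n p, Rabs (Sp (n + p)%nat x - Sp n x) <= ck n.
  move=> x hx n p; have := S_cauchy x hx n p; have := ck_pos (n + p)%nat; lra.
pose G x := epsilon (inhabits 0) (fun l => Un_cv (fun n => Sp n x) l).
have G_cv : forall x, Xn x -> Un_cv (fun n => Sp n x) (G x).
  move=> x hx; apply: epsilon_spec.
  suff hC : Cauchy_crit (fun n => Sp n x).
    by have [l hl] := R_complete _ hC; exists l.
  move=> eps heps.
  have [K hK] := geom_small c0 (eps := eps / 2) ltac:(lra).
  exists K => n p hn hp. rewrite /Rdist.
  have [n' ->] : exists n', n = (K + n')%nat.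
    exists (n - K)%nat; apply/esym/subnKC; apply/leP; exact hn.
  have [p' ->] : exists p', p = (K + p')%nat.
    exists (p - K)%nat; apply/esym/subnKC; apply/leP; exact hp.
  have := S_cauchy' x hx K n'. have := S_cauchy' x hx K p'.
  have := Rabs_triang (Sp (K + n')%nat x - Sp K x) (Sp K x - Sp (K + p')%nat x).
  rewrite (Rabs_minus_sym (Sp K x)).
  have -> : Sp (K + n')%nat x - Sp K x + (Sp K x - Sp (K + p')%nat x) = Sp (K + n')%nat x - Sp (K + p')%nat x by ring.
  rewrite /ck in hK |- *. lra.
have G_tail : forall x, Xn x -> forall n, Rabs (G x - Sp n x) <= ck n.
  move=> x hx n; apply: (lim_le (n := n) (G_cv x hx)) => p; exact: S_cauchy'.
exists G; split; [|split].
- apply: ccont_cont_on => //.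
  move=> y hy e he.
  have [n hn] := geom_small c0 (eps := e / 3) ltac:(lra).
  have [V [hV [Vy HV]]] := S_cont n y hy (e/3) ltac:(lra).
  exists V; split => //; split => // z Vz hz.
  have t1 := G_tail z hz n. have t2 := G_tail y hy n. have t3 := HV z Vz hz.
  rewrite /ck in t1 t2.
  have := Rabs_triang (G z - Sp n z) (Sp n z - G y).
  have := Rabs_triang (Sp n z - Sp n y) (Sp n y - G y).
  rewrite (Rabs_minus_sym (Sp n y)).
  have -> : Sp n z - Sp n y + (Sp n y - G y) = Sp n z - G y by ring.
  have -> : G z - Sp n z + (Sp n z - G y) = G z - G y by ring.
  lra.
- exists c0 => x hx; have := G_tail x hx 0%N; rewrite /= Rminus_0_r /ck /= Rmult_1_r //.
- move=> y hy; apply: Rminus_diag_uniq.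
  apply: NNPP => hne; have hne' := @Rabs_no_R0 _ hne.
  have hpos : 0 < Rabs (G y - f y) by have := Rabs_pos (G y - f y); lra.
  move: hpos.
  move=> hpos.
  have [n hn] := geom_small c0 (eps := Rabs (G y - f y) / 2) ltac:(lra).
  have t1 := G_tail y (or_intror hy) n. have t2 := (Inv n).2 y hy.
  rewrite S_L // in t1.
  have := Rabs_triang (G y - (f y - fk n y)) (- fk n y). rewrite Rabs_Ropp.
  have -> : G y - (f y - fk n y) + - fk n y = G y - f y by ring.
  rewrite /ck in t1 t2. lra.
Qed.

End Tietze.

Section Zemb.
Variable m : nat.
Notation N := m.+1.
Notation P := (Defs.pt N).
Variable A : P -> Prop.
Hypothesis hA : forall a, A a -> Ln a.
Notation op := (tau_open A).
Notation ccont := (ccont A).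

Lemma Ln_Xn (x : P) : Ln x -> Xn x.
Proof. by right. Qed.

Lemma max0_eq0 a : Rmax a 0 = 0 -> a <= 0.
Proof. move=> h; have := Rmax_l a 0; lra. Qed.

Lemma zemb_sep : z_embedded (@Xn N) op (@Ln N) ->
  forall f c, ccont (@Ln N) f -> 0 < c -> exists phi, sep_spec A f c phi.
Proof.
move=> hz f c hf hc.
have hcst : forall k, ccont (@Ln N) (fun _ => k) by move=> k; apply: ccont_const; exact: Ln_Xn.
pose u1 y := Rmax (f y + c) 0.
pose u2 y := Rmax (c - f y) 0.
have hu1 : ccont (@Ln N) u1 by apply: (ccont_max0 hA); apply: (ccont_add hA).
have hu2 : ccont (@Ln N) u2 by apply: (ccont_max0 hA); apply: (ccont_minus hA).
have [Z1' [[g1 [hg1 hZ1']] htr1]] := hz (fun y => Ln y /\ u1 y = 0)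
  ltac:(exists u1; split => //; apply: ccont_cont_on => //; exact: Ln_Xn).
have [Z2' [[g2 [hg2 hZ2']] htr2]] := hz (fun y => Ln y /\ u2 y = 0)
  ltac:(exists u2; split => //; apply: ccont_cont_on => //; exact: Ln_Xn).
have cg1 := cont_on_ccont hg1. have cg2 := cont_on_ccont hg2.
have z1 : forall x, Ln x -> g1 x = 0 -> f x + c <= 0.
  move=> x hx h; have : Z1' x by apply/hZ1'; split => //; exact: Ln_Xn.
  move/(htr1 x hx) => [_ /max0_eq0] //.
have z2 : forall x, Ln x -> g2 x = 0 -> c - f x <= 0.
  move=> x hx h; have : Z2' x by apply/hZ2'; split => //; exact: Ln_Xn.
  move/(htr2 x hx) => [_ /max0_eq0] //.
have w1 : forall x, Ln x -> f x <= - c -> g1 x = 0.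
  move=> x hx h; have : (Ln x /\ u1 x = 0) by split => //; rewrite /u1 Rmax_right //; lra.
  move/(htr1 x hx)/hZ1' => [] //.
have w2 : forall x, Ln x -> c <= f x -> g2 x = 0.
  move=> x hx h; have : (Ln x /\ u2 x = 0) by split => //; rewrite /u2 Rmax_right //; lra.
  move/(htr2 x hx)/hZ2' => [] //.
pose den x := Rabs (g1 x) + Rabs (g2 x) + lastc x.
have den_pos : forall x, Xn x -> 0 < den x.
  move=> x [hP|hL].
  - have := Rabs_pos (g1 x); have := Rabs_pos (g2 x); move: hP; rewrite /den /Pn; lra.
  - rewrite /den hL Rplus_0_r.
    have a1 := Rabs_pos (g1 x); have a2 := Rabs_pos (g2 x).
    apply: Rnot_le_lt => hle.
    have e1 : g1 x = 0 by apply: NNPP => hn; have := @Rabs_no_R0 _ hn; lra.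
    have e2 : g2 x = 0 by apply: NNPP => hn; have := @Rabs_no_R0 _ hn; lra.
    have := z1 x hL e1; have := z2 x hL e2; lra.
exists (fun x => (Rabs (g1 x) - Rabs (g2 x)) / den x); split; [|split; [|split]].
- apply: (ccont_div hA).
  + move=> y hy; have := den_pos y hy; lra.
  + apply: (ccont_minus hA). apply: ccont_abs. exact cg1. apply: ccont_abs; exact cg2.
  + apply: (ccont_add hA); [apply: (ccont_add hA); apply: (ccont_abs) => //| exact: ccont_lastc].
- move=> x hx; have hd := den_pos x hx.
  set q := (Rabs (g1 x) - Rabs (g2 x)) / den x.
  have hq : q * den x = Rabs (g1 x) - Rabs (g2 x) by rewrite /q; field; lra.
  have a1 := Rabs_pos (g1 x); have a2 := Rabs_pos (g2 x).
  have hl : 0 <= lastc x by case: hx; rewrite /Pn /Ln; lra.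
  rewrite /den in hd hq.
  apply: Rabs_le; split; nra.
- move=> x hx h; rewrite (w1 x hx h) Rabs_R0 /den (w1 x hx h) Rabs_R0 hx.
  have ng2 : g2 x <> 0 by move=> e; have := z2 x hx e; lra.
  have := @Rabs_no_R0 _ ng2 => h2. field. lra.
- move=> x hx h; rewrite (w2 x hx h) Rabs_R0 /den (w2 x hx h) Rabs_R0 hx.
  have ng1 : g1 x <> 0 by move=> e; have := z1 x hx e; lra.
  have := @Rabs_no_R0 _ ng1 => h1. field. lra.
Qed.

Lemma min1_lip u v : Rabs (Rmin v 1 - Rmin u 1) <= Rabs (v - u).
Proof.
rewrite /Rmin; case: Rle_dec; case: Rle_dec => h1 h2; apply: Rabs_le;
have := Rle_abs (v - u); have := Rle_abs (-(v-u)); rewrite Rabs_Ropp; lra.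
Qed.

Lemma cstar_zemb : Cstar_embedded (@Xn N) op (@Ln N) -> z_embedded (@Xn N) op (@Ln N).
Proof.
move=> hC Z [f [hf hZ]].
have cf := cont_on_ccont hf.
pose h y := Rmin (Rabs (f y)) 1.
have ch : ccont (@Ln N) h.
  apply: (ccont_comp (g := fun t => Rmin t 1)); last exact: ccont_abs.
  move=> y _ e he; exists e; split => // v hv.
  have := min1_lip (Rabs (f y)) v; lra.
have hb : bounded_on (@Ln N) h.
  exists 1 => y _; rewrite /h Rabs_pos_eq.
  - exact: Rmin_r.
  - apply: Rmin_glb; [exact: Rabs_pos| lra].
have [g [hg [_ hgh]]] := hC h (ccont_cont_on (@Ln_Xn) ch) hb.
exists (fun x => Xn x /\ g x = 0); split; first by exists g.
move=> y hy; rewrite hZ hgh //; rewrite /h; split.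
- move=> [_ ->]; split; first exact: Ln_Xn.
  rewrite Rabs_R0 /Rmin; case: Rle_dec => //; lra.
- move=> [_]; rewrite /Rmin; case: Rle_dec => h1 h2; last lra.
  split => //; apply: NNPP => hn; have := @Rabs_no_R0 _ hn; lra.
Qed.

End Zemb.

Definition is_glb (S : R -> Prop) l := (forall r, S r -> l <= r) /\ (forall b, (forall r, S r -> b <= r) -> b <= l).
Definition rinf (S : R -> Prop) := epsilon (inhabits 0) (is_glb S).

Lemma rinf_spec (S : R -> Prop) b : (exists r, S r) -> (forall r, S r -> b <= r) -> is_glb S (rinf S).
Proof.
move=> [r0 hr0] hb; apply: epsilon_spec.
have hbd : bound (fun t => S (- t)).
  exists (- b) => t ht; have := hb _ ht; lra.
have hex : exists t, S (- t).
  exists (- r0); by rewrite Ropp_involutive.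
have [M [hM1 hM2]] := completeness _ hbd hex.
exists (- M); split.
- move=> r hr; have hr' : S (- - r) by rewrite Ropp_involutive.
  have := hM1 (- r) hr'; lra.
- move=> b' hb'; have : M <= - b'.
    apply: hM2 => t ht; have := hb' _ ht; lra.
  lra.
Qed.

Lemma INR_exp2 n : INR (2 ^ n)%N = 2 ^ n.
Proof.
elim: n => [|n IH] //=; rewrite expnS -multE mult_INR IH //.
Qed.

Lemma ex_minimal (Q : nat -> Prop) K : Q K -> exists k, Q k /\ forall j, (j < k)%N -> ~ Q j.
Proof.
elim: K {-2}K (leqnn K) => [|K IH] j hj hQ.
- move: hj; rewrite leqn0 => /eqP hj; subst j; exists 0%N; split => //.
- case: (classic (exists i, (i <= K)%N /\ Q i)) => [[i [hi hQi]]|hno].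
  + exact: IH hi hQi.
  + exists j; split => // i hij hQi; apply: hno; exists i; split => //.
    by rewrite -ltnS; apply: leq_trans hij hj.
Qed.

Lemma min_sub a b : a <= b -> Rmin b 1 - Rmin a 1 <= b - a.
Proof. rewrite /Rmin; case: Rle_dec; case: Rle_dec => ? ? ?; lra. Qed.

Section Urysohn.
Variable m : nat.
Notation N := m.+1.
Notation P := (Defs.pt N).
Variable A : P -> Prop.
Hypothesis hA : forall a, A a -> Ln a.
Notation op := (tau_open A).
Notation ccont := (ccont A).
Notation closed := (closed_in (@Xn N) op).
Hypothesis hN : normal_space (@Xn N) op.

Definition shr_spec (F U : P -> Prop) (p : (P -> Prop) * (P -> Prop)) :=
  op p.1 /\ closed p.2 /\ (forall x, F x -> p.1 x) /\ (forall x, p.1 x -> p.2 x) /\ (forall x, p.2 x -> U x).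

Lemma shrink_ex F U : closed F -> op U -> (forall x, F x -> U x) -> exists p, shr_spec F U p.
Proof.
move=> hF hU hFU.
have hD : closed (fun x => Xn x /\ ~ U x).
  split; first by move=> x [].
  apply: (op_ext (U := fun x => U x) _ hU) => x; split.
  - move=> hx; split; [exact: op_sub hU hx| by move=> [_ []]].
  - move=> [hx h]; apply: NNPP => hn; exact: h.
have [U1 [V1 [hU1 [hV1 [hFU1 [hDV1 hdis]]]]]] := hN hF hD ltac:(by move=> x /hFU hx [_ []]).
exists (U1, fun x => Xn x /\ ~ V1 x); split; [|split; [|split; [|split]]] => //=.
- split; first by move=> x [].
  apply: (op_ext (U := fun x => V1 x) _ hV1) => x; split.
  + move=> hx; split; [exact: op_sub hV1 hx| by move=> [_ []]].
  + move=> [hx h]; apply: NNPP => hn; exact: h.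
- move=> x hx; split; [exact: op_sub hU1 hx| move=> hv; exact: hdis x hx hv].
- move=> x [hx hv]; apply: NNPP => hn; apply: hv; apply: hDV1; split => //.
Qed.

Variables (Cs Ds : P -> Prop).
Hypotheses (hC : closed Cs) (hD : closed Ds) (hCD : forall x, Cs x -> Ds x -> False).

Definition W := fun x => Xn x /\ ~ Ds x.
Definition XX : (P -> Prop) * (P -> Prop) := (@Xn N, @Xn N).
Definition shr F U := epsilon (inhabits XX) (shr_spec F U).

Fixpoint lev (n : nat) : nat -> (P -> Prop) * (P -> Prop) :=
  match n with
  | 0%N => fun k => if k == 0%N then shr Cs W else if k == 1%N then (W, W) else XX
  | n'.+1 => fun j => if (2 ^ n'.+1 < j)%N then XX
       else if odd j then shr (lev n' j./2).2 (lev n' (j./2).+1).1 else lev n' j./2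
  end.

Definition Inv n :=
  (forall k, op (lev n k).1) /\ (forall k x, (lev n k).1 x -> (lev n k).2 x) /\
  (forall k x, (lev n k).2 x -> Xn x) /\ (forall k, (k < 2 ^ n)%N -> closed (lev n k).2) /\
  (forall k x, (lev n k).2 x -> (lev n k.+1).1 x) /\ lev n (2 ^ n) = (W, W) /\
  (forall k, (2 ^ n < k)%N -> lev n k = XX) /\ (forall x, Cs x -> (lev n 0).1 x).

Lemma W_open : op W.
Proof. exact: hD.2. Qed.

Lemma W_Xn x : W x -> Xn x.
Proof. by case. Qed.

Lemma Inv0 : Inv 0.
Proof.
have hs : shr_spec Cs W (shr Cs W).
  apply: epsilon_spec; apply: shrink_ex => //; [exact: W_open| move=> x hx; split; [exact: hC.1| move=> hd; exact: hCD x hx hd]].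
case: hs => [s1 [s2 [s3 [s4 s5]]]].
split; [|split; [|split; [|split; [|split; [|split; [|split]]]]]].
- case=> [|[|k]] /=; [exact: s1| exact: W_open| exact: Xn_open].
- case=> [|[|k]] /= x; [exact: s4| done| done].
- case=> [|[|k]] /= x; [move=> /s5; exact: W_Xn| exact: W_Xn| done].
- case=> [|k] // _; exact: s2.
- case=> [|[|k]] /= x; [exact: s5| exact: W_Xn| done].
- done.
- case=> [|[|k]] //.
- exact: s3.
Qed.

Lemma InvS n : Inv n -> Inv n.+1.
Proof.
move=> [a [b [c [d [e [f [g h]]]]]]].
have hsh : forall k, (k < 2 ^ n)%N -> shr_spec (lev n k).2 (lev n k.+1).1 (shr (lev n k).2 (lev n k.+1).1).
  move=> k hk; apply: epsilon_spec; apply: shrink_ex; [exact: d| exact: a| exact: e].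
have lev_ev : forall k, (k <= 2 ^ n)%N -> lev n.+1 k.*2 = lev n k.
  move=> k hk /=; rewrite expnS mul2n ltn_double ltnNge hk /= odd_double doubleK //.
have lev_od : forall k, (k < 2 ^ n)%N -> lev n.+1 k.*2.+1 = shr (lev n k).2 (lev n k.+1).1.
  move=> k hk /=; rewrite expnS mul2n.
  rewrite ltnNge ltn_double hk /= odd_double uphalf_double //.
have lev_big : forall j, (2 ^ n.+1 < j)%N -> lev n.+1 j = XX by move=> j hj /=; rewrite hj.
have cases : forall j, (2 ^ n.+1 < j)%N \/ (exists k, j = k.*2 /\ (k <= 2 ^ n)%N) \/ (exists k, j = k.*2.+1 /\ (k < 2 ^ n)%N).
  move=> j; case: (ltnP (2 ^ n.+1) j) => hj; [by left| right].
  rewrite -(odd_double_half j) in hj |- *.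
  case: (odd j) hj => /= hj; [right|left]; exists j./2; split => //;
  move: hj; rewrite expnS mul2n.
  - by rewrite ltn_double.
  - by rewrite leq_double.
split; [|split; [|split; [|split; [|split; [|split; [|split]]]]]].
- move=> j; case: (cases j) => [hj|[[k [-> hk]]|[k [-> hk]]]].
  + by rewrite lev_big //; exact: Xn_open.
  + by rewrite lev_ev.
  + by rewrite lev_od //; case: (hsh k hk).
- move=> j x; case: (cases j) => [hj|[[k [-> hk]]|[k [-> hk]]]].
  + by rewrite lev_big.
  + by rewrite lev_ev //; apply: b.
  + by rewrite lev_od //; case: (hsh k hk) => [_ [_ [_ [s4 _]]]]; apply: s4.
- move=> j x; case: (cases j) => [hj|[[k [-> hk]]|[k [-> hk]]]].
  + by rewrite lev_big.
  + by rewrite lev_ev //; apply: c.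
  + rewrite lev_od //; case: (hsh k hk) => [_ [s2 _]] hx; exact: s2.1 x hx.
- move=> j hj; case: (cases j) => [hj'|[[k [hk' hk]]|[k [hk' hk]]]].
  + by exfalso; move: hj'; rewrite ltnNge ltnW.
  + subst j; rewrite lev_ev //; apply: d; move: hj; rewrite expnS mul2n ltn_double //.
  + by subst j; rewrite lev_od //; case: (hsh k hk) => [_ [s2 _]].
- move=> j x; case: (cases j) => [hj|[[k [-> hk]]|[k [-> hk]]]].
  + by rewrite !lev_big //; apply: ltnW.
  + rewrite lev_ev //. case: (ltnP k (2 ^ n)) => hk2.
    * rewrite lev_od //; case: (hsh k hk2) => [_ [_ [s3 _]]]; apply: s3.
    * have -> : k = (2 ^ n)%N by apply/eqP; rewrite eqn_leq hk hk2.
      move=> hx; rewrite lev_big; first exact: c hx.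
      by rewrite expnS mul2n ltnSn.
  + rewrite lev_od // => hx. have : (lev n k.+1).1 x by case: (hsh k hk) => [_ [_ [_ [_ s5]]]]; apply: s5.
    by rewrite -lev_ev.
- by rewrite expnS mul2n lev_ev.
- by move=> j hj; rewrite lev_big.
- by move=> x hx; rewrite -[0%N]/(0.*2)%N lev_ev //; apply: h.
Qed.

Lemma Inv_all n : Inv n.
Proof. elim: n => [|n IH]; [exact: Inv0| exact: InvS]. Qed.

Lemma lev_even n k : lev n.+1 k.*2 = lev n k.
Proof.
have [_ [_ [_ [_ [_ [_ [g _]]]]]]] := Inv_all n.
rewrite /=. case: (ltnP (2 ^ n) k) => hk.
- have -> : (2 ^ n.+1 < k.*2)%N by rewrite expnS mul2n ltn_double.
  by rewrite g.
- rewrite expnS mul2n ltn_double ltnNge hk /= odd_double doubleK //.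
Qed.

Lemma lev_lift n p k : lev (n + p) (k * 2 ^ p) = lev n k.
Proof.
elim: p => [|p IH]; first by rewrite addn0 expn0 muln1.
by rewrite addnS expnS mulnCA mul2n lev_even IH.
Qed.

Lemma lev_mono n j k : (j <= k)%N -> forall x, (lev n j).1 x -> (lev n k).1 x.
Proof.
have [_ [b [_ [_ [e _]]]]] := Inv_all n.
move=> hjk; rewrite -(subnKC hjk); elim: (k - j)%N => [|i IH] x; first by rewrite addn0.
by move=> /IH hx; rewrite addnS; apply: e; apply: b.
Qed.

Lemma lev_cross p j n k : (j * 2 ^ n <= k * 2 ^ p)%N -> forall x, (lev p j).1 x -> (lev n k).1 x.
Proof.
move=> h x; rewrite -(lev_lift p n j) -(lev_lift n p k) addnC; exact: lev_mono.
Qed.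

Definition dy (n k : nat) := Rmin (INR k / 2 ^ n) 1.
Definition Sx x := fun r => exists n k, (lev n k).1 x /\ r = dy n k.
Definition psi x := rinf (Sx x).

Lemma dy_ge0 n k : 0 <= dy n k.
Proof.
rewrite /dy; apply: Rmin_glb; last lra.
apply: Rmult_le_pos; [exact: pos_INR| left; apply: Rinv_0_lt_compat; apply: pow_lt; lra].
Qed.

Lemma Sx_ne x : Xn x -> exists r, Sx x r.
Proof.
move=> hx; have [_ [_ [_ [_ [_ [_ [g _]]]]]]] := Inv_all 0.
by exists (dy 0 2); exists 0%N, 2%N; split => //; rewrite g.
Qed.

Lemma psi_glb x : Xn x -> is_glb (Sx x) (psi x).
Proof.
move=> hx; apply: (rinf_spec (b := 0)); first exact: Sx_ne.
by move=> r [n [k [_ ->]]]; apply: dy_ge0.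
Qed.

Lemma psi_le x n k : Xn x -> (lev n k).1 x -> psi x <= dy n k.
Proof. move=> hx h; apply: (psi_glb hx).1; by exists n, k. Qed.

Lemma psi_ge x n k : Xn x -> ~ (lev n k).1 x -> dy n k <= psi x.
Proof.
move=> hx h; apply: (psi_glb hx).2 => r [p [j [hj ->]]].
rewrite /dy.
case: (Rle_lt_dec (INR k / 2 ^ n) (INR j / 2 ^ p)) => hlt.
- rewrite /Rmin; case: Rle_dec; case: Rle_dec => ? ?; lra.
- exfalso; apply: h; apply: (lev_cross (p := p) (j := j)) => //.
  apply/leP; apply: INR_le.
  rewrite -!multE !mult_INR !INR_exp2.
  have h1 : 0 < 2 ^ n by apply: pow_lt; lra.
  have h2 : 0 < 2 ^ p by apply: pow_lt; lra.
  have : INR j / 2 ^ p * (2 ^ p * 2 ^ n) <= INR k / 2 ^ n * (2 ^ p * 2 ^ n).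
    apply: Rmult_le_compat_r; [apply: Rmult_le_pos; lra| lra].
  have -> : INR j / 2 ^ p * (2 ^ p * 2 ^ n) = INR j * 2 ^ n by field; lra.
  have -> : INR k / 2 ^ n * (2 ^ p * 2 ^ n) = INR k * 2 ^ p by field; lra.
  done.
Qed.

Lemma psi_range x : Xn x -> 0 <= psi x <= 1.
Proof.
move=> hx; split.
- apply: (psi_glb hx).2 => r [n [k [_ ->]]]; apply: dy_ge0.
- have [_ [_ [_ [_ [_ [_ [g _]]]]]]] := Inv_all 0.
  have := psi_le (n := 0) (k := 2) hx ltac:(rewrite g //).
  rewrite /dy /Rmin; case: Rle_dec => /= h; lra.
Qed.

Lemma psi_C x : Cs x -> psi x = 0.
Proof.
move=> hx; have hX := hC.1 x hx; have := psi_range hX.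
have [_ [_ [_ [_ [_ [_ [_ h]]]]]]] := Inv_all 0.
have := psi_le (n := 0) (k := 0) hX (h x hx).
have -> : dy 0 0 = 0 by rewrite /dy /= /Rdiv Rmult_0_l /Rmin; case: Rle_dec; lra.
lra.
Qed.

Lemma psi_D x : Ds x -> psi x = 1.
Proof.
move=> hx; have hX := hD.1 x hx; have := psi_range hX.
have [_ [_ [_ [_ [_ [f _]]]]]] := Inv_all 0.
have := psi_ge (n := 0) (k := 1) hX ltac:(move=> /= [_ hn]; exact: hn hx).
rewrite /dy /= /Rmin; case: Rle_dec; lra.
Qed.

Lemma INR_sub2 k : (2 <= k)%N -> INR (k - 2) = INR k - 2.
Proof.
move=> h; have e : k = ((k - 2) + 2)%N by lia.
rewrite [in RHS]e -plusE plus_INR /=; ring.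
Qed.

Lemma dy_gap n k : (2 <= k)%N -> dy n k - 2 / 2 ^ n <= dy n (k - 2).
Proof.
move=> h; rewrite /dy.
have h2n : 0 < 2 ^ n by apply: pow_lt; lra.
have hle : INR (k - 2) / 2 ^ n <= INR k / 2 ^ n.
  apply: Rmult_le_compat_r; [left; apply: Rinv_0_lt_compat => //| apply: le_INR; apply/leP; lia].
have := min_sub hle.
have -> : INR k / 2 ^ n - INR (k - 2) / 2 ^ n = 2 / 2 ^ n by rewrite INR_sub2 //; field; lra.
lra.
Qed.

Lemma dy_small n k : (k < 2)%N -> dy n k <= 2 / 2 ^ n.
Proof.
move=> h; rewrite /dy; apply: Rle_trans (Rmin_l _ _) _.
have h2n : 0 < 2 ^ n by apply: pow_lt; lra.
apply: Rmult_le_compat_r; first (left; apply: Rinv_0_lt_compat => //).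
have : (k <= 2)%coq_nat by apply/leP; lia.
move/le_INR => /=; lra.
Qed.

Lemma psi_cont : ccont (@Xn N) psi.
Proof.
move=> x hx e he.
have [n hn] := pow_lt_1_zero (/2) ltac:(rewrite Rabs_pos_eq; lra) (e / 2) ltac:(lra).
have {hn} hn := hn n (le_n n). rewrite Rabs_pos_eq in hn; last by apply: pow_le; lra.
rewrite pow_inv in hn.
have h2n : 0 < 2 ^ n by apply: pow_lt; lra.
have he2 : 2 / 2 ^ n < e by rewrite /Rdiv; lra.
have [a [b [_ [d [e' [_ [g _]]]]]]] := Inv_all n.
have [k0 [hk0 hmin]] := ex_minimal (Q := fun k => (lev n k).1 x) (K := (2 ^ n).+1)
  ltac:(change ((lev n (2 ^ n).+1).1 x); rewrite g ?ltnSn //).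
have hk0b : (k0 <= (2 ^ n).+1)%N.
  rewrite leqNgt; apply/negP => hlt; apply: (hmin _ hlt).
  change ((lev n (2 ^ n).+1).1 x); rewrite g ?ltnSn //.
have hup : forall y, Xn y -> (lev n k0).1 y -> psi y <= dy n k0 by move=> y hy; apply: psi_le.
have key : forall y, Xn y -> (lev n k0).1 y -> dy n k0 - 2 / 2 ^ n <= psi y -> Rabs (psi y - psi x) < e.
  move=> y hy hV hlow.
  have h1 := hup y hy hV. have h2 := hup x hx hk0.
  have hxlow : dy n k0 - 2 / 2 ^ n <= psi x.
    case: (leqP 2 k0) => hk2.
    + have hnot : ~ (lev n (k0 - 2)%N).1 x.
        move=> hh; apply: (hmin (k0.-1)).
        * lia.
        * have hjk : (k0 - 2 <= k0.-1)%N by lia.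
          exact: (lev_mono hjk hh).
      have := psi_ge hx hnot.
      have := dy_gap n hk2; lra.
    + have := dy_small n hk2; have := psi_range hx; lra.
  apply: Rabs_def1; lra.
case: (leqP 2 k0) => hk2.
- set E := (lev n (k0 - 2)%N).2.
  have hE : closed E by apply: d; lia.
  exists (fun y => (lev n k0).1 y /\ (Xn y /\ ~ E y)); split.
  + apply: op_inter => //; exact: hE.2.
  + split.
    * split => //; split => // hEx.
      apply: (hmin (k0.-1)); first lia.
      have -> : k0.-1 = (k0 - 2).+1 by lia.
      exact: e' _ _ hEx.
    * move=> y [hV [hy hnE]] _; apply: key => //.
      have := psi_ge (n := n) (k := (k0 - 2)%N) hy (fun hh => hnE (b _ _ hh)).
      have := dy_gap n hk2; lra.
- exists (lev n k0).1; split; [exact: a| split => //].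
  move=> y hV hy; apply: key => //.
  have := dy_small n hk2; have := psi_range hy; lra.
Qed.

End Urysohn.

Section Dist.
Variable m : nat.
Notation N := m.+1.
Notation P := (Defs.pt N).

Definition dset (S : P -> Prop) x := rinf (fun r => exists s, S s /\ r = edist x s).

Variable S : P -> Prop.
Hypothesis hS : exists s, S s.

Lemma dset_glb x : is_glb (fun r => exists s, S s /\ r = edist x s) (dset S x).
Proof.
apply: (rinf_spec (b := 0)).
- by case: hS => s hs; exists (edist x s), s.
- by move=> r [s [_ ->]]; apply: edist_ge0.
Qed.

Lemma dset_le x s : S s -> dset S x <= edist x s.
Proof. move=> hs; apply: (dset_glb x).1; by exists s. Qed.

Lemma dset_lb x c : (forall s, S s -> c <= edist x s) -> c <= dset S x.
Proof. move=> h; apply: (dset_glb x).2 => r [s [hs ->]]; exact: h. Qed.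

Lemma dset_ge0 x : 0 <= dset S x.
Proof. apply: dset_lb => s _; apply: edist_ge0. Qed.

Lemma dset_zero x : S x -> dset S x = 0.
Proof. move=> hx; have := dset_le x hx; rewrite edist_xx; have := dset_ge0 x; lra. Qed.

Lemma dset_lip z y : dset S z <= dset S y + edist z y.
Proof.
have : dset S z - edist z y <= dset S y.
  apply: dset_lb => s hs; have := dset_le z hs; have := edist_triangle z y s; lra.
lra.
Qed.

End Dist.

Section Normal.
Variable m : nat.
Notation N := m.+1.
Notation P := (Defs.pt N).
Variable A : P -> Prop.
Hypothesis hA : forall a, A a -> Ln a.
Notation op := (tau_open A).
Notation ccont := (ccont A).
Notation closed := (closed_in (@Xn N) op).

Lemma dset_ccont (S : P -> Prop) : (exists s, S s) -> ccont (@Xn N) (dset S).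
Proof.
move=> hS; apply: ccont_eucl => // y hy e he; exists e; split => // z _ hz.
apply: Rabs_def1.
- have := dset_lip hS z y; lra.
- have := dset_lip hS y z; rewrite edist_sym; lra.
Qed.

Lemma closed_compl_A (H : P -> Prop) y : closed H -> A y -> ~ H y ->
  exists eps, 0 < eps /\ forall z, Xn z -> H z -> eps <= edist y z.
Proof.
move=> [hHX hHo] hAy hny.
have hy : (fun x => Xn x /\ ~ H x) y by split => //; right; exact: hA.
have [_ [c2 _]] := hHo.2 y hy.
have [eps [he hb]] := c2 hAy.
exists eps; split => // z hz hHz.
apply: Rnot_lt_le => hlt.
have := hb z ltac:(rewrite /ball edist_sym //) hz. by case.
Qed.

Lemma dset_pos (H : P -> Prop) y : closed H -> (exists s, Ln s /\ H s) -> A y -> ~ H y ->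
  0 < dset (fun x => Ln x /\ H x) y.
Proof.
move=> hH hS hAy hny.
have [eps [he hb]] := closed_compl_A hH hAy hny.
apply: Rlt_le_trans he _; apply: (dset_lb hS) => s [hs1 hs2]; apply: hb => //; by right.
Qed.

Lemma sepL (H K : P -> Prop) : closed H -> closed K -> (forall x, H x -> K x -> False) ->
  exists f, ccont (@Ln N) f /\ (forall x, Ln x -> H x -> f x <= -1) /\ (forall x, Ln x -> K x -> 1 <= f x).
Proof.
move=> hH hK hHK.
case: (classic (exists s, Ln s /\ H s)) => hSH; last first.
  exists (fun _ => 1); split; first by apply: ccont_const => x; right.
  split => [x hx h|x _ _]; [exfalso; apply: hSH; by exists x| lra].
case: (classic (exists s, Ln s /\ K s)) => hSK; last first.
  exists (fun _ => -1); split; first by apply: ccont_const => x; right.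
  split => [x _ _|x hx h]; [lra| exfalso; apply: hSK; by exists x].
set HL := fun x => Ln x /\ H x. set KL := fun x => Ln x /\ K x.
pose dH := dset HL. pose dK := dset KL.
have cH : ccont (@Xn N) dH by apply: dset_ccont.
have cK : ccont (@Xn N) dK by apply: dset_ccont.
pose g x := 2 * dH x / (dH x + dK x) - 1.
pose f x := if excluded_middle_informative (KL x) then 1 else g x.
set Y' := fun x => Xn x /\ 0 < dH x + dK x.
have oY' : op Y'.
  apply: (open_gt (f := fun x => dH x + dK x)); exact: (ccont_add hA).
have cg : ccont Y' g.
  apply: (ccont_add hA); last by apply: ccont_const => x [].
  apply: (ccont_div hA).
  - by move=> y [_ hy]; lra.
  - apply: ccont_scal; apply: ccont_sub cH; by move=> x [].
  - apply: (ccont_add hA); apply: ccont_sub; try eassumption; by move=> x [].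
exists f; split; [|split].
- move=> y hy e he.
  case: (classic (A y)) => hAy; last first.
    exists (tball y 1); split; first by apply: tball_open => //; lra.
    split; first by left.
    move=> z hz hLz; rewrite (tball_Ln hy _ hz hLz); last lra.
    rewrite Rminus_diag Rabs_R0; lra.
  have hpos : 0 < dH y + dK y.
    case: (classic (H y)) => hHy.
    + have hnK : ~ K y by move=> hk; exact: hHK y hHy hk.
      have h1 : 0 < dK y := dset_pos hK hSK hAy hnK. have h2 : 0 <= dH y := dset_ge0 hSH y. lra.
    + have h1 : 0 < dH y := dset_pos hH hSH hAy hHy. have h2 : 0 <= dK y := dset_ge0 hSK y. lra.
  have hyY : Y' y by split; [right| ].
  have [V0 [hV0 [V0y HV0]]] := cg y hyY e he.
  case: (excluded_middle_informative (KL y)) => hKy.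
  + have hfy : f y = 1 by rewrite /f; case: excluded_middle_informative.
    have hgy : g y = 1.
      have hnH : ~ H y by move=> hh; exact: hHK y hh hKy.2.
      have h0 : dK y = 0 by apply: (dset_zero hSK).
      have := dset_pos hH hSH hAy hnH. rewrite /g h0 -/dH => hp. field; lra.
    exists (fun z => V0 z /\ Y' z); split; [exact: op_inter| split => //].
    move=> z [hz hz'] hLz; rewrite hfy /f; case: excluded_middle_informative => hkz.
    * rewrite Rminus_diag Rabs_R0; lra.
    * rewrite -hgy; exact: HV0.
  + have hfy : f y = g y by rewrite /f; case: excluded_middle_informative.
    set Y'' := fun x => Xn x /\ 0 < dK x.
    have oY'' : op Y'' by apply: open_gt.
    have hyY'' : Y'' y.
      split; [right => //|]. apply: dset_pos => // hk; apply: hKy; by split.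
    exists (fun z => (V0 z /\ Y' z) /\ Y'' z); split; [apply: op_inter => //; exact: op_inter| split => //].
    move=> z [[hz hz'] [_ hz'']] hLz; rewrite hfy /f; case: excluded_middle_informative => hKz.
    * exfalso; have := dset_zero hSK hKz; rewrite -/dK; lra.
    * exact: HV0.
- move=> x hx hHx; rewrite /f; case: excluded_middle_informative => hKx.
  + exfalso; exact: hHK x hHx hKx.2.
  + have h0 : dH x = 0 by apply: (dset_zero hSH).
    rewrite /g h0 /= Rmult_0_r /Rdiv Rmult_0_l; lra.
- move=> x hx hKx; rewrite /f; case: excluded_middle_informative => hn /=; [lra| exfalso; apply: hn; by split].
Qed.

End Normal.

Section Normal2.
Variable m : nat.
Notation N := m.+1.
Notation P := (Defs.pt N).
Variable A : P -> Prop.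
Hypothesis hA : forall a, A a -> Ln a.
Notation op := (tau_open A).
Notation ccont := (ccont A).
Notation closed := (closed_in (@Xn N) op).

Definition rad_spec (K : P -> Prop) (x : P) r := 0 < r /\ 2 * r < lastc x /\ forall z, ball x (2 * r) z -> ~ K z.
Definition rad (K : P -> Prop) (x : P) := epsilon (inhabits 0) (rad_spec K x).
Definition Wset (H K : P -> Prop) z := exists x, H x /\ Pn x /\ ball x (rad K x) z.

Lemma rad_ok K x : closed K -> Pn x -> ~ K x -> rad_spec K x (rad K x).
Proof.
move=> [_ hKo] hP hnK; apply: epsilon_spec.
have hx : (fun y => Xn y /\ ~ K y) x by split => //; left.
have [c1 _] := hKo.2 x hx.
have [eps [[he1 he2] hb]] := c1 hP.
exists (eps / 2); split; [lra| split; [lra|]].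
move=> z hz; have : ball x eps z by move: hz; rewrite /ball; lra.
by move/hb => [].
Qed.

Variables (H K : P -> Prop).
Hypotheses (hH : closed H) (hK : closed K) (hHK : forall x, H x -> K x -> False).

Lemma rad_HK x : H x -> Pn x -> rad_spec K x (rad K x).
Proof. move=> hx hP; apply: rad_ok => // hk; exact: hHK x hx hk. Qed.

Lemma rad_KH x : K x -> Pn x -> rad_spec H x (rad H x).
Proof. move=> hx hP; apply: rad_ok => // hh; exact: hHK x hh hx. Qed.

Lemma Wset_open_gen (H' K' : P -> Prop) : (forall x, H' x -> Pn x -> rad_spec K' x (rad K' x)) -> op (Wset H' K').
Proof.
move=> hr; apply: open_local.
- move=> z [x [hx [hP hz]]]; left; apply: (ball_in_P hP _ hz).
  have [h1 [h2 _]] := hr x hx hP; lra.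
- move=> z [x [hx [hP hz]]]; have [h1 [h2 _]] := hr x hx hP.
  exists (ball x (rad K' x)); split; [apply: ball_P_open => //; lra| split => //].
  move=> w hw; by exists x.
Qed.

Lemma Wset_disj z : Wset H K z -> Wset K H z -> False.
Proof.
move=> [x [hx [hPx hzx]]] [y [hy [hPy hzy]]].
have [r1 [r2 r3]] := rad_HK hx hPx. have [s1 [s2 s3]] := rad_KH hy hPy.
rewrite /ball in hzx hzy.
have t := edist_triangle x z y. rewrite (edist_sym x z) in t.
case: (Rle_lt_dec (rad H y) (rad K x)) => hc.
- apply: (r3 y) => //; rewrite /ball edist_sym; lra.
- apply: (s3 x) => //; rewrite /ball; lra.
Qed.

Lemma Wset_far h : H h -> Ln h -> exists V, op V /\ V h /\ forall z, V z -> ~ Wset K H z.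
Proof.
move=> hh hLh.
have hnK : ~ K h by move=> hk; exact: hHK h hh hk.
case: (classic (A h)) => hAh.
- have [eps [he hb]] := closed_compl_A hA hK hAh hnK.
  exists (BX h (eps / 2)); split; [exact: BX_open| split; [split; [rewrite /ball edist_xx; lra| by right]|]].
  move=> z [hz _] [y [hy [hPy hzy]]].
  have [s1 [s2 s3]] := rad_KH hy hPy.
  have h1 : 2 * rad H y <= edist h y.
    apply: Rnot_lt_le => hlt; apply: (s3 h) => //; rewrite /ball edist_sym //.
  have h2 := hb y (or_introl hPy) hy.
  have t := edist_triangle h z y. rewrite /ball in hz hzy. rewrite (edist_sym h z) in t.
  lra.
- have hx : (fun y => Xn y /\ ~ K y) h by split => //; right.
  have [_ [_ c3]] := hK.2.2 h hx.
  have [eps [he hb]] := c3 hLh hAh.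
  exists (tball h (eps / 6)); split; [apply: tball_open => //; lra| split; [by left|]].
  move=> z hz [y [hy [hPy hzy]]].
  have [s1 [s2 s3]] := rad_KH hy hPy.
  set s := rad H y in s1 s2 s3 hzy.
  have hPz : Pn z by apply: (ball_in_P hPy _ hzy); lra.
  have hzh : sq z h < 2 * (eps / 6) * lastc z.
    have he6 : 0 < eps / 6 by lra.
    case: (tball_cases hLh he6 hz) => [ezh|[hs _]]; last exact hs.
    exfalso; rewrite ezh in hPz; exact: Pn_not_Ln hPz hLh.
  have hyh : 2 * eps * lastc y <= sq y h.
    apply: Rnot_lt_le => hlt.
    have : tball h eps y by right; apply/(ball_shift y hLh he).
    by move/hb => [].
  have h1 : 2 * s <= edist h y.
    apply: Rnot_lt_le => hlt; apply: (s3 h) => //; rewrite /ball edist_sym //.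
  rewrite /ball in hzy.
  have t := edist_triangle y z h. rewrite (edist_sym y z) (edist_sym y h) in t.
  have hzn := lastc_near y z.
  set a := edist z h in t hzh. set b := edist h y in t h1.
  have ea : sq z h = a ^ 2 by rewrite -edist_sq.
  have eb : sq y h = b ^ 2 by rewrite -edist_sq edist_sym.
  have ha : b / 2 < a by lra.
  have hb0 : 0 <= b by apply: edist_ge0.
  have : b ^ 2 / 4 <= a ^ 2.
    have -> : b ^ 2 / 4 = (b / 2) ^ 2 by field.
    apply: pow_incr; lra.
  move: hPy; rewrite /Pn => hPy.
  have : lastc z < 3 / 2 * lastc y by lra.
  move=> hz3 hab.
  have : 2 * (eps / 6) * lastc z < eps / 2 * lastc y.
    have -> : eps / 2 * lastc y = 2 * (eps / 6) * (3 / 2 * lastc y) by field.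
    apply: Rmult_lt_compat_l; lra.
  rewrite ea in hzh. rewrite eb in hyh. lra.
Qed.

End Normal2.

Section NormalMain.
Variable m : nat.
Notation N := m.+1.
Notation P := (Defs.pt N).
Variable A : P -> Prop.
Hypothesis hA : forall a, A a -> Ln a.
Notation op := (tau_open A).
Notation ccont := (ccont A).
Notation closed := (closed_in (@Xn N) op).

Lemma normal_of_zemb : z_embedded (@Xn N) op (@Ln N) -> normal_space (@Xn N) op.
Proof.
move=> hz H K hH hK hHK.
have [f [cf [fH fK]]] := sepL hA hH hK hHK.
have [phi [cphi [_ [pH pK]]]] := zemb_sep hA hz (c := 1) cf ltac:(lra).
set U1 := fun x => Xn x /\ phi x < 0.
set V1 := fun x => Xn x /\ 0 < phi x.
have oU1 : op U1 by apply: open_lt.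
have oV1 : op V1 by apply: open_gt.
have hKH : forall x, K x -> H x -> False by move=> x a b; exact: hHK x b a.
exists (fun z => Wset H K z \/ (U1 z /\ exists V, op V /\ V z /\ forall w, V w -> ~ Wset K H w)).
exists (fun z => Wset K H z \/ (V1 z /\ exists V, op V /\ V z /\ forall w, V w -> ~ Wset H K w)).
have oW1 : op (Wset H K) by apply: (Wset_open_gen hA) => x hx hP; exact: (rad_HK hK hHK hx hP).
have oW2 : op (Wset K H) by apply: (Wset_open_gen hA) => x hx hP; exact: (rad_KH hH hHK hx hP).
split; [|split; [|split; [|split]]].
- apply: open_local.
  + move=> z [hw|[[hzz _] _]] //; exact: op_sub oW1 hw.
  + move=> z [hw|[hU [V [oV [Vz VW]]]]].
    * exists (Wset H K); split => //; split => // w hw'; by left.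
    * exists (fun w => U1 w /\ V w); split; [exact: op_inter| split => //].
      move=> w [hw1 hw2]; right; split => //; exists V; split => //.
- apply: open_local.
  + move=> z [hw|[[hzz _] _]] //; exact: op_sub oW2 hw.
  + move=> z [hw|[hU [V [oV [Vz VW]]]]].
    * exists (Wset K H); split => //; split => // w hw'; by left.
    * exists (fun w => V1 w /\ V w); split; [exact: op_inter| split => //].
      move=> w [hw1 hw2]; right; split => //; exists V; split => //.
- move=> x hx; case: (hH.1 x hx) => [hP|hL].
  + left; exists x; split => //; split => //; rewrite /ball edist_xx; by case: (rad_HK hK hHK hx hP).
  + right; split.
    * split; [by right| rewrite (pH x hL (fH x hL hx)); lra].
    * exact: (Wset_far hA hH hK hHK hx hL).
- move=> x hx; case: (hK.1 x hx) => [hP|hL].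
  + left; exists x; split => //; split => //; rewrite /ball edist_xx; by case: (rad_KH hH hHK hx hP).
  + right; split.
    * split; [by right| rewrite (pK x hL (fK x hL hx)); lra].
    * exact: (Wset_far hA hK hH hKH hx hL).
- move=> z [h1|[h1 [V [_ [Vz VW]]]]] [h2|[h2 [V' [_ [V'z V'W]]]]].
  + exact: (Wset_disj hH hK hHK h1 h2).
  + exact: V'W z V'z h1.
  + exact: VW z Vz h2.
  + move: h1 h2; rewrite /U1 /V1; lra.
Qed.

End NormalMain.

Section Fin.
Variable m : nat.
Notation N := m.+1.
Notation P := (Defs.pt N).
Variable A : P -> Prop.
Hypothesis hA : forall a, A a -> Ln a.
Notation op := (tau_open A).
Notation ccont := (ccont A).
Notation closed := (closed_in (@Xn N) op).

Lemma closed_level_le (f : P -> R) (a : R) : ccont (@Ln N) f ->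
  closed (fun x => Ln x /\ f x <= a).
Proof.
move=> hf; split; first by move=> x [h _]; right.
apply: open_local; first by move=> x [].
move=> x [hx hn]; case: hx => [hP|hL].
- exists (@Pn N); split; [exact: Pn_open| split => //].
  move=> z hz; split; [by left| move=> [hl _]; exact: Pn_not_Ln hz hl].
- have hfx : a < f x by apply: Rnot_le_lt => h; apply: hn; split.
  have [V [hV [Vx HV]]] := hf x hL (f x - a) ltac:(lra).
  exists V; split => //; split => // z Vz; have hz := op_sub hV Vz; split => //.
  move=> [hLz hfz]; have := HV z Vz hLz.
  have := Rle_abs (- (f z - f x)); rewrite Rabs_Ropp; lra.
Qed.

Lemma closed_level_ge (f : P -> R) (a : R) : ccont (@Ln N) f ->
  closed (fun x => Ln x /\ a <= f x).
Proof.
move=> hf; split; first by move=> x [h _]; right.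
apply: open_local; first by move=> x [].
move=> x [hx hn]; case: hx => [hP|hL].
- exists (@Pn N); split; [exact: Pn_open| split => //].
  move=> z hz; split; [by left| move=> [hl _]; exact: Pn_not_Ln hz hl].
- have hfx : f x < a by apply: Rnot_le_lt => h; apply: hn; split.
  have [V [hV [Vx HV]]] := hf x hL (a - f x) ltac:(lra).
  exists V; split => //; split => // z Vz; have hz := op_sub hV Vz; split => //.
  move=> [hLz hfz]; have := HV z Vz hLz.
  have := Rle_abs (f z - f x); lra.
Qed.

Lemma normal_sep : normal_space (@Xn N) op ->
  forall f c, ccont (@Ln N) f -> 0 < c -> exists phi, sep_spec A f c phi.
Proof.
move=> hN f c hf hc.
have hC := closed_level_le (-c) hf.
have hD := closed_level_ge c hf.
have hCD : forall x, (Ln x /\ f x <= - c) -> (Ln x /\ c <= f x) -> False.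
  move=> x [_ h1] [_ h2]; lra.
set ps := psi A (fun x => Ln x /\ f x <= - c) (fun x => Ln x /\ c <= f x).
exists (fun x => 2 * ps x - 1); split; [|split; [|split]].
- apply: (ccont_add hA); last by apply: ccont_const.
  apply: ccont_scal; exact: (psi_cont hA hN hC hD hCD).
- move=> x hx; have := psi_range hN hC hD hCD hx; rewrite -/ps => h.
  apply: Rabs_le; lra.
- move=> x hx h; rewrite /ps (psi_C hN hC hD hCD (x := x)); [lra| by split].
- move=> x hx h; rewrite /ps (psi_D hN hC hD hCD (x := x)); [lra| by split].
Qed.

Lemma main_m :
  (normal_space (@Xn N) op <-> Cstar_embedded (@Xn N) op (@Ln N)) /\
  (Cstar_embedded (@Xn N) op (@Ln N) <-> z_embedded (@Xn N) op (@Ln N)).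
Proof.
split; split.
- move=> hN; apply: (tietze hA); exact: normal_sep.
- move=> hC; apply: (normal_of_zemb hA); exact: cstar_zemb.
- exact: cstar_zemb.
- move=> hz; apply: (tietze hA); exact: zemb_sep.
Qed.

End Fin.

Theorem mainTheorem7 (n : nat) (A : pt n -> Prop) :
  (2 <= n)%N ->
  (forall a, A a -> Ln a) ->
  (normal_space (@Xn n) (tau_open A) <-> Cstar_embedded (@Xn n) (tau_open A) (@Ln n)) /\
  (Cstar_embedded (@Xn n) (tau_open A) (@Ln n) <-> z_embedded (@Xn n) (tau_open A) (@Ln n)).
Proof.
case: n A => [|m] A hn hA; first by [].
exact: main_m.
Qed.
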